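(* Fix $b\in(0,1/9)$. For $t\in(0,1/9)$ let $\mathcal S_t$ be the system on $\mathbb R$ given by $S_{1,t}(x)=tx$, $S_2(x)=bx$, $S_3(x)=(x+8)/9$, with attractor $K_t$. Then for Lebesgue almost all $t\in(0,1/9)$, $$S_{1,t}(K_t)\cap S_2(K_t)=S_{1,t}S_2(K_t).$$
   Context: The attractor $K_t$ is the unique nonempty compact set with $K_t=S_{1,t}(K_t)\cup S_2(K_t)\cup S_3(K_t)$. *)

(* Defs.v *)
From Stdlib Require Import Reals Rtopology.
Open Scope R_scope.

Definition img (f : R -> R) (A : R -> Prop) : R -> Prop :=
  fun y => exists x, A x /\ y = f x.

Definition S1 (t : R) (x : R) : R := t * x.
Definition S2 (b : R) (x : R) : R := b * x.
Definition S3 (x : R) : R := (x + 8) / 9.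

(* K is the attractor of S_t: a nonempty compact set with
   K = S_{1,t}(K) ∪ S_2(K) ∪ S_3(K)  (unique by Hutchinson's theorem). *)
Definition is_attractor (b t : R) (K : R -> Prop) : Prop :=
  (exists x, K x) /\ compact K /\
  (forall y, K y <-> (img (S1 t) K y \/ img (S2 b) K y \/ img S3 K y)).

Definition lebesgue_null (N : R -> Prop) : Prop :=
  forall eps : R, 0 < eps ->
    exists a c : nat -> R,
      (forall n, a n <= c n) /\
      (forall x, N x -> exists n, a n <= x <= c n) /\
      (forall n, sum_f_R0 (fun k => c k - a k) n <= eps).

(* Main.v *)
Require Import Defs.
From Stdlib Require Import Reals Rtopology.
From Stdlib Require Import ClassicalEpsilon Classical List Lra Lia.
Import ListNotations.
Open Scope R_scope.


Fixpoint sumN (f : nat -> R) (n : nat) : R :=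
  match n with O => 0 | S n' => sumN f n' + f n' end.

Lemma sum_f_sumN f n : sum_f_R0 f n = sumN f (S n).
Proof. induction n; simpl in *. lra. rewrite IHn. simpl. lra. Qed.

Lemma sumN_ext_lt f g n : (forall i, (i < n)%nat -> f i = g i) -> sumN f n = sumN g n.
Proof. induction n; intros H; simpl. lra. rewrite IHn by (intros; apply H; lia). rewrite (H n) by lia. lra. Qed.

Lemma sumN_add f g n : sumN (fun i => f i + g i) n = sumN f n + sumN g n.
Proof. induction n; simpl. lra. rewrite IHn. lra. Qed.

Lemma sumN_app f a b : sumN f (a + b) = sumN f a + sumN (fun j => f (a + j)%nat) b.
Proof. induction b; simpl. rewrite Nat.add_0_r. lra. rewrite Nat.add_succ_r. simpl. rewrite IHb. lra. Qed.

Lemma sumN_nonneg f n : (forall i, 0 <= f i) -> 0 <= sumN f n.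
Proof. intros H; induction n; simpl. lra. specialize (H n). lra. Qed.

Lemma sumN_mono f a b : (forall i, 0 <= f i) -> (a <= b)%nat -> sumN f a <= sumN f b.
Proof. intros H Hab. replace b with (a + (b - a))%nat by lia. rewrite sumN_app.
  pose proof (sumN_nonneg (fun j => f (a + j)%nat) (b - a) (fun i => H _)). lra. Qed.

Lemma sumN_le f g n : (forall i, (i < n)%nat -> f i <= g i) -> sumN f n <= sumN g n.
Proof. induction n; intros H; simpl. lra. pose proof (H n ltac:(lia)). pose proof (IHn (fun i Hi => H i ltac:(lia))). lra. Qed.

Fixpoint enum (n : nat) : nat * nat :=
  match n with
  | O => (O, O)
  | S n' => let (j, i) := enum n' in
            match i with O => (O, S j) | S i' => (S j, i') end
  end.

Fixpoint Tri (d : nat) : nat := match d with O => O | S d' => (Tri d' + S d')%nat end.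

Lemma enum_T d : forall j, (j <= d)%nat -> enum (Tri d + j) = (j, d - j)%nat.
Proof.
  induction d; intros j Hj.
  - assert (j = 0%nat) by lia. subst. reflexivity.
  - induction j.
    + rewrite Nat.add_0_r. simpl Tri. replace (Tri d + S d)%nat with (S (Tri d + d)) by lia.
      simpl. rewrite IHd by lia. rewrite Nat.sub_diag. reflexivity.
    + replace (Tri (S d) + S j)%nat with (S (Tri (S d) + j)) by lia.
      change (enum (S (Tri (S d) + j))) with (let (j0, i) := enum (Tri (S d) + j) in
            match i with O => (O, S j0) | S i' => (S j0, i') end).
      rewrite IHj by lia. destruct (S d - j)%nat eqn:E. lia. f_equal. lia.
Qed.

Lemma enum_surj j i : enum (Tri (j + i) + j) = (j, i).
Proof. rewrite enum_T by lia. f_equal. lia. Qed.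

Lemma Tri_ge d : (d <= Tri d)%nat.
Proof. induction d; simpl; lia. Qed.

Lemma sum_enum (g : nat -> nat -> R) D :
  sumN (fun n => g (fst (enum n)) (snd (enum n))) (Tri D) =
  sumN (fun d => sumN (fun j => g j (d - j)%nat) (S d)) D.
Proof.
  induction D. reflexivity.
  simpl Tri. rewrite sumN_app, IHD.
  transitivity (sumN (fun d => sumN (fun j => g j (d - j)%nat) (S d)) D + sumN (fun j => g j (D - j)%nat) (S D)); [|reflexivity].
  f_equal. apply sumN_ext_lt. intros i Hi. rewrite enum_T by lia. reflexivity.
Qed.

Lemma swap_tri (g : nat -> nat -> R) D :
  sumN (fun d => sumN (fun j => g j (d - j)%nat) (S d)) D =
  sumN (fun j => sumN (g j) (D - j)) D.
Proof.
  induction D. reflexivity.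
  transitivity (sumN (fun d => sumN (fun j => g j (d - j)%nat) (S d)) D + sumN (fun j => g j (D - j)%nat) (S D)); [reflexivity|].
  rewrite IHD.
  transitivity (sumN (fun j => sumN (g j) (D - j)) D + sumN (fun j => g j (D - j)%nat) (S D)); [reflexivity|].
  transitivity (sumN (fun j => sumN (g j) (S D - j)) D + sumN (g D) (S D - D)); [|reflexivity].
  replace (S D - D)%nat with 1%nat by lia.
  rewrite (sumN_ext_lt (fun j => sumN (g j) (S D - j)) (fun j => sumN (g j) (D - j) + g j (D - j)%nat)).
  2:{ intros i Hi. replace (S D - i)%nat with (S (D - i)) by lia. reflexivity. }
  rewrite sumN_add. simpl. rewrite Nat.sub_diag. lra.
Qed.

Lemma geom_half eps D : sumN (fun j => eps * (/2)^(S j)) D = eps * (1 - (/2)^D).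
Proof. induction D. simpl; lra.
  transitivity (sumN (fun j => eps * (/2)^(S j)) D + eps * (/2)^(S D)); [reflexivity|].
  rewrite IHD. simpl. field. Qed.

Lemma null_union (N : nat -> R -> Prop) :
  (forall j, lebesgue_null (N j)) -> lebesgue_null (fun x => exists j, N j x).
Proof.
  intros H eps Heps.
  set (P := fun j (p : (nat -> R) * (nat -> R)) =>
      (forall n, fst p n <= snd p n) /\
      (forall x, N j x -> exists n, fst p n <= x <= snd p n) /\
      (forall n, sum_f_R0 (fun k => snd p k - fst p k) n <= eps * (/2)^(S j))).
  set (F := fun j => epsilon (inhabits ((fun _ => 0), (fun _ => 0))) (P j)).
  assert (HP : forall j, P j (F j)).
  { intro j. apply epsilon_spec.
    assert (0 < eps * (/2)^(S j)) by (apply Rmult_lt_0_compat; [lra | apply pow_lt; lra]).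
    destruct (H j _ H0) as [a [c Hac]]. exists (a, c). exact Hac. }
  exists (fun n => fst (F (fst (enum n))) (snd (enum n))).
  exists (fun n => snd (F (fst (enum n))) (snd (enum n))).
  split; [|split].
  - intro n. apply (HP _).
  - intros x [j Hj]. destruct (HP j) as [_ [Hc _]]. destruct (Hc x Hj) as [i Hi].
    exists (Tri (j + i) + j)%nat. rewrite enum_surj. exact Hi.
  - intro M. rewrite sum_f_sumN.
    set (g := fun j i => snd (F j) i - fst (F j) i).
    assert (Hg : forall j i, 0 <= g j i) by (intros j i; unfold g; destruct (HP j) as [H1 _]; specialize (H1 i); lra).
    eapply Rle_trans.
    { apply (sumN_mono (fun n => g (fst (enum n)) (snd (enum n))) (S M) (Tri (S M))).
      intros; apply Hg. apply Tri_ge. }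
    rewrite sum_enum, swap_tri.
    eapply Rle_trans.
    { apply (sumN_le _ (fun j => eps * (/2)^(S j))). intros j _.
      destruct (S M - j)%nat eqn:E. simpl sumN. pose proof (pow_lt (/2) (S j) ltac:(lra)). nra.
      destruct (HP j) as [_ [_ Hs]]. specialize (Hs n). rewrite sum_f_sumN in Hs. exact Hs. }
    rewrite geom_half. pose proof (pow_lt (/2) (S M) ltac:(lra)). nra.
Qed.


Inductive sym := s1 | s2 | s3.
Definition step (b t : R) (i : sym) (x : R) : R :=
  match i with s1 => S1 t x | s2 => S2 b x | s3 => S3 x end.
Definition appw (b t : R) (u : list sym) (y : R) : R := fold_right (step b t) y u.
Definition rr (b t : R) (u : list sym) : R :=
  fold_right (fun i r => match i with s1 => t * r | s2 => b * r | s3 => r / 9 end) 1 u.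
Fixpoint words (n : nat) : list (list sym) :=
  match n with O => [nil] | S n' => flat_map (fun w => [s1 :: w; s2 :: w; s3 :: w]) (words n') end.
Definition sumL {A} (f : A -> R) (l : list A) : R := fold_right (fun x s => f x + s) 0 l.

Lemma app_affine b t u y : appw b t u y = appw b t u 0 + rr b t u * y.
Proof. induction u as [|i u IH]; simpl. lra. unfold appw in *; simpl. rewrite IH.
  destruct i; unfold step, S1, S2, S3; simpl; field. Qed.

Section B.
Variables (b t : R) (hb : 0 < b < 1/9) (ht : 0 <= t <= 1/9).

Lemma app_bounds u y : 0 <= y <= 1 -> 0 <= appw b t u y <= 1.
Proof. intros Hy. induction u as [|i u IH]; simpl. lra.
  destruct i; unfold step, S1, S2, S3; simpl; split; nra. Qed.

Lemma rr_bounds u : 0 <= rr b t u <= rr b (1/9) u.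
Proof. induction u as [|i u IH]; simpl. lra. destruct i; split; nra. Qed.
End B.

Lemma app_lip b t1 t2 u y : 0 < b < 1/9 -> 0 <= t1 <= t2 -> t2 <= 1/9 -> 0 <= y <= 1 ->
  - (9/8) * (t2 - t1) <= appw b t2 u y - appw b t1 u y <= (9/8) * (t2 - t1).
Proof. intros hb H1 H2 Hy. induction u as [|i u IH]; simpl. lra.
  pose proof (app_bounds b t1 hb ltac:(lra) u y Hy) as A1.
  pose proof (app_bounds b t2 hb ltac:(lra) u y Hy) as A2.
  unfold appw in *. set (X1 := fold_right (step b t1) y u) in *.
  set (X2 := fold_right (step b t2) y u) in *.
  destruct i; unfold step, S1, S2, S3; simpl.
  - replace (t2 * X2 - t1 * X1) with ((t2 - t1) * X2 + t1 * (X2 - X1)) by ring.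
    assert (0 <= (t2 - t1) * X2 <= (t2 - t1)) by (split; nra).
    assert (t1 * (X2 - X1) <= (1/9) * ((9/8) * (t2 - t1))) by nra.
    assert (t1 * (X2 - X1) >= - (1/9) * ((9/8) * (t2 - t1))) by nra.
    split; lra.
  - replace (b * X2 - b * X1) with (b * (X2 - X1)) by ring. split; nra.
  - split; lra. Qed.

Lemma words_in u : In u (words (length u)).
Proof. induction u as [|i u IH]; simpl. auto. apply in_flat_map. exists u. split; auto.
  destruct i; simpl; auto. Qed.

Lemma sumL_app {A} (f : A -> R) l1 l2 : sumL f (l1 ++ l2) = sumL f l1 + sumL f l2.
Proof. induction l1; simpl. lra. unfold sumL in *; simpl. rewrite IHl1. lra. Qed.

Lemma sumL_flat_map {A B} (f : B -> R) (g : A -> list B) l :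
  sumL f (flat_map g l) = sumL (fun x => sumL f (g x)) l.
Proof. induction l; simpl. reflexivity. rewrite sumL_app. unfold sumL in *; simpl. rewrite IHl. lra. Qed.

Lemma sumL_map {A B} (f : B -> R) (g : A -> B) l : sumL f (map g l) = sumL (fun x => f (g x)) l.
Proof. induction l; simpl. reflexivity. unfold sumL in *; simpl. rewrite IHl. lra. Qed.

Lemma sumL_ext {A} (f g : A -> R) l : (forall x, f x = g x) -> sumL f l = sumL g l.
Proof. intros H; induction l; simpl. reflexivity. unfold sumL in *; simpl. rewrite IHl, H. lra. Qed.

Lemma sumL_add {A} (f g : A -> R) l : sumL (fun x => f x + g x) l = sumL f l + sumL g l.
Proof. induction l; simpl. unfold sumL; simpl; lra. unfold sumL in *; simpl. rewrite IHl. lra. Qed.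

Lemma sumL_scal {A} (f : A -> R) a l : sumL (fun x => a * f x) l = a * sumL f l.
Proof. induction l; simpl. unfold sumL; simpl; lra. unfold sumL in *; simpl. rewrite IHl. lra. Qed.

Lemma sumL_const {A} a (l : list A) : sumL (fun _ => a) l = INR (length l) * a.
Proof. induction l; simpl. unfold sumL; simpl; lra. unfold sumL in *; simpl. rewrite IHl.
  destruct (length l); simpl; lra. Qed.

Lemma sum_words b t n : sumL (rr b t) (words n) = (t + b + 1/9) ^ n.
Proof. induction n; simpl. unfold sumL; simpl; lra.
  rewrite sumL_flat_map. rewrite <- IHn. rewrite <- sumL_scal. apply sumL_ext.
  intros x. unfold sumL; simpl. lra. Qed.

Lemma length_words n : INR (length (words n)) = 3 ^ n.
Proof. induction n; simpl. reflexivity. rewrite <- IHn.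
  generalize (words n). intro l. induction l. simpl. lra.
  change (INR (S (S (S (length (flat_map (fun w => [s1 :: w; s2 :: w; s3 :: w]) l))))) = 3 * INR (S (length l))).
  rewrite !S_INR, IHl. lra. Qed.


Lemma small_pow (x eps : R) : 0 <= x < 1 -> 0 < eps -> exists n, x ^ n < eps.
Proof. intros Hx He. destruct (pow_lt_1_zero x ltac:(rewrite Rabs_right; lra) eps He) as [N HN].
  exists N. specialize (HN N (le_n _)). rewrite Rabs_right in HN. lra.
  apply Rle_ge, pow_le; lra. Qed.

Section Att.
Variables (b t : R) (hb : 0 < b < 1/9) (ht : 0 < t < 1/9) (K : R -> Prop)
  (HK : is_attractor b t K).

Lemma K01 y : K y -> 0 <= y <= 1.
Proof.
  destruct HK as [_ [Hc Hinv]]. destruct (compact_P1 K Hc) as [m [M HmM]].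
  set (D := Rabs m + Rabs M + 1).
  assert (HD : 0 <= D) by (unfold D; pose proof (Rabs_pos m); pose proof (Rabs_pos M); lra).
  assert (Cl : forall n y, K y -> - (D * (/9)^n) <= y <= 1 + D * (/9)^n).
  { induction n; intros z Hz.
    - simpl. specialize (HmM z Hz). pose proof (Rle_abs m). pose proof (Rle_abs M).
      pose proof (Rabs_pos m). pose proof (Rabs_pos M). pose proof (Rle_abs (-m)). rewrite Rabs_Ropp in H3.
      unfold D. lra.
    - assert (He : 0 <= D * (/9)^n) by (apply Rmult_le_pos; [lra| apply pow_le; lra]).
      replace (D * (/9)^(S n)) with ((D * (/9)^n) / 9) by (simpl; field).
      set (e := D * (/9)^n) in *.
      destruct (proj1 (Hinv z) Hz) as [[x [Hx ->]] | [[x [Hx ->]] | [x [Hx ->]]]];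
      specialize (IHn x Hx); unfold S1, S2, S3; split; nra. }
  intros Hy. split.
  - destruct (Rle_or_lt 0 y) as [|Hlt]; auto. exfalso.
    destruct (small_pow (/9) (-y / (D+1)) ltac:(lra)) as [n Hn].
    { apply Rdiv_lt_0_compat; lra. }
    specialize (Cl n y Hy). apply Rmult_lt_compat_l with (r := D + 1) in Hn; [|lra].
    replace ((D+1) * (-y/(D+1))) with (-y) in Hn by (field; lra).
    assert (0 <= (/9)^n) by (apply pow_le; lra). nra.
  - destruct (Rle_or_lt y 1) as [|Hlt]; auto. exfalso.
    destruct (small_pow (/9) ((y-1) / (D+1)) ltac:(lra)) as [n Hn].
    { apply Rdiv_lt_0_compat; lra. }
    specialize (Cl n y Hy). apply Rmult_lt_compat_l with (r := D + 1) in Hn; [|lra].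
    replace ((D+1) * ((y-1)/(D+1))) with (y-1) in Hn by (field; lra).
    assert (0 <= (/9)^n) by (apply pow_le; lra). nra.
Qed.

Lemma K_S1 x : K x -> K (t * x).
Proof. intros Hx. destruct HK as [_ [_ Hinv]]. apply Hinv. left. exists x. split; auto. Qed.
Lemma K_S2 x : K x -> K (b * x).
Proof. intros Hx. destruct HK as [_ [_ Hinv]]. apply Hinv. right; left. exists x. split; auto. Qed.

Lemma K_S1n n x : K x -> K (t ^ n * x).
Proof. intros Hx. induction n; simpl. rewrite Rmult_1_l. auto.
  rewrite Rmult_assoc. apply K_S1. auto. Qed.
Lemma K_S2n n x : K x -> K (b ^ n * x).
Proof. intros Hx. induction n; simpl. rewrite Rmult_1_l. auto.
  rewrite Rmult_assoc. apply K_S2. auto. Qed.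

Lemma K0 : K 0.
Proof.
  apply NNPP. intros H0. destruct HK as [[x0 Hx0] [Hc _]].
  destruct (compact_P2 K Hc 0 H0) as [del Hdel].
  destruct (small_pow t del ltac:(lra) (cond_pos del)) as [n Hn].
  apply (Hdel (t ^ n * x0)); [| apply K_S1n; auto].
  unfold disc. rewrite Rminus_0_r, Rabs_mult, Rabs_right by (apply Rle_ge, pow_le; lra).
  pose proof (K01 x0 Hx0). rewrite Rabs_right by lra.
  assert (0 <= t^n) by (apply pow_le; lra). nra.
Qed.
End Att.

Lemma peel (K : R -> Prop) (c d : R) (hc : 0 < c <= 1/9)
  (Hinv : forall y, K y -> (exists x, K x /\ y = c * x) \/ (exists x, K x /\ y = d * x) \/
                        (exists x, K x /\ y = S3 x))
  (Hb : forall y, K y -> 0 <= y <= 1) :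
  forall y, K y -> y = 0 \/ exists k x, K x /\ (y = c ^ k * (d * x) \/ y = c ^ k * S3 x).
Proof.
  assert (Cl : forall n y, K y -> 1 < y * 9 ^ n ->
             exists k x, K x /\ (y = c ^ k * (d * x) \/ y = c ^ k * S3 x)).
  { induction n; intros y Hy Hn.
    - simpl in Hn. specialize (Hb y Hy). lra.
    - destruct (Hinv y Hy) as [[x [Hx ->]] | [[x [Hx ->]] | [x [Hx ->]]]].
      + assert (Hx1 : 1 < x * 9 ^ n).
        { simpl in Hn. specialize (Hb x Hx). assert (0 < 9 ^ n) by (apply pow_lt; lra). nra. }
        destruct (IHn x Hx Hx1) as [k [w [Hw [E|E]]]]; exists (S k), w; split; auto;
          [left|right]; rewrite E; simpl; ring.
      + exists O, x. split; auto. left. simpl; ring.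
      + exists O, x. split; auto. right. simpl; ring. }
  intros y Hy. destruct (Req_dec y 0) as [|Hy0]; [left; auto | right].
  assert (0 < y) by (specialize (Hb y Hy); lra).
  destruct (small_pow (/9) y ltac:(lra) H) as [n Hn].
  apply (Cl n y Hy). rewrite pow_inv in Hn. assert (0 < 9 ^ n) by (apply pow_lt; lra).
  apply Rmult_lt_compat_r with (r := 9 ^ n) in Hn; auto. rewrite Rinv_l in Hn; lra.
Qed.


Lemma sumN_shift g M : sumN g (S M) = g O + sumN (fun n => g (S n)) M.
Proof. induction M. simpl. lra. 
  transitivity (sumN g (S M) + g (S M)); [reflexivity|]. rewrite IHM. simpl. lra. Qed.

Lemma sumL_nonneg {A} (f : A -> R) l : (forall p, In p l -> 0 <= f p) -> 0 <= sumL f l.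
Proof. induction l; intros H; unfold sumL in *; simpl. lra.
  pose proof (H a (or_introl eq_refl)). pose proof (IHl (fun q Hq => H q (or_intror Hq))). lra. Qed.

Lemma nth_sum (f : R * R -> R) l : f (0,0) = 0 -> (forall p, In p l -> 0 <= f p) ->
  forall M, sumN (fun n => f (nth n l (0,0))) M <= sumL f l.
Proof.
  intros Hf. induction l as [|p l IH]; intros Hpos M.
  - simpl. unfold sumL; simpl. induction M; simpl. lra. destruct M; simpl in *; lra.
  - destruct M. simpl. unfold sumL; simpl.
    pose proof (Hpos p (or_introl eq_refl)).
    pose proof (sumL_nonneg f l (fun q Hq => Hpos q (or_intror Hq))). unfold sumL in H0. lra.
    rewrite sumN_shift. simpl nth.
    change (sumL f (p :: l)) with (f p + sumL f l).
    pose proof (IH (fun q Hq => Hpos q (or_intror Hq)) M). lra.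
Qed.

Lemma jordan_null (N : R -> Prop) :
  (forall eps, 0 < eps -> exists l : list (R * R), (forall p, In p l -> fst p <= snd p) /\
     (forall x, N x -> exists p, In p l /\ fst p <= x <= snd p) /\
     sumL (fun p => snd p - fst p) l <= eps) -> lebesgue_null N.
Proof.
  intros H eps Heps. destruct (H eps Heps) as [l [Hwf [Hcov Hs]]].
  exists (fun n => fst (nth n l (0,0))), (fun n => snd (nth n l (0,0))).
  split; [|split].
  - intro n. destruct (Nat.lt_ge_cases n (length l)).
    apply Hwf, nth_In; auto. rewrite nth_overflow; auto. simpl; lra.
  - intros x Hx. destruct (Hcov x Hx) as [p [Hp Hxp]]. destruct (In_nth l p (0,0) Hp) as [n [_ Hn]].
    exists n. rewrite Hn. auto.
  - intro M. rewrite sum_f_sumN. eapply Rle_trans; [|exact Hs].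
    apply (nth_sum (fun p => snd p - fst p)). simpl; lra. intros p Hp; specialize (Hwf p Hp); lra.
Qed.

Lemma decomp b t K : is_attractor b t K ->
  forall n y, K y -> exists u y', length u = n /\ K y' /\ y = appw b t u y'.
Proof.
  intros [_ [_ Hinv]]. induction n; intros y Hy.
  - exists nil, y. auto.
  - destruct (IHn y Hy) as [u [y' [Hl [Hy' E]]]].
    destruct (proj1 (Hinv y') Hy') as [[x [Hx Ex]] | [[x [Hx Ex]] | [x [Hx Ex]]]];
    [exists (u ++ [s1]) | exists (u ++ [s2]) | exists (u ++ [s3])]; exists x;
    rewrite length_app, Hl; simpl; (split; [lia|split; auto]); unfold appw; rewrite fold_right_app;
    rewrite E; unfold appw; simpl; unfold step; rewrite Ex; reflexivity.
Qed.

Definition Eset (b : R) (k m : nat) (u v : list sym) (t : R) : Prop :=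
  0 <= t <= 1/9 /\ exists y1 y2, 0 <= y1 <= 1 /\ 0 <= y2 <= 1 /\
    t ^ (S k) * (appw b t u y1 + 8) = b ^ (S m) * (appw b t v y2 + 8).

Lemma diam b k m u v t1 t2 : 0 < b < 1/9 -> Eset b k m u v t1 -> Eset b k m u v t2 -> t1 <= t2 ->
  (t2 - t1) * b ^ (S m) <= rr b (1/9) u + rr b (1/9) v.
Proof.
  intros hb [Ht1 [y1 [y2 [Hy1 [Hy2 Eq1]]]]] [Ht2 [z1 [z2 [Hz1 [Hz2 Eq2]]]]] Hle.
  pose proof (app_bounds b t1 hb Ht1 u y1 Hy1) as X1.
  pose proof (app_bounds b t1 hb Ht1 v y2 Hy2) as Y1.
  rewrite (app_affine b t1 u y1), (app_affine b t1 v y2) in Eq1.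
  rewrite (app_affine b t2 u z1), (app_affine b t2 v z2) in Eq2.
  rewrite (app_affine b t1 u y1) in X1. rewrite (app_affine b t1 v y2) in Y1.
  pose proof (app_bounds b t1 hb Ht1 u 0 ltac:(lra)) as HA1.
  pose proof (app_bounds b t2 hb Ht2 u 0 ltac:(lra)) as HA2.
  pose proof (app_bounds b t1 hb Ht1 v 0 ltac:(lra)) as HB1.
  pose proof (app_bounds b t2 hb Ht2 v 0 ltac:(lra)) as HB2.
  pose proof (app_lip b t1 t2 u 0 hb ltac:(lra) ltac:(lra) ltac:(lra)) as LA.
  pose proof (app_lip b t1 t2 v 0 hb ltac:(lra) ltac:(lra) ltac:(lra)) as LB.
  pose proof (rr_bounds b t1 hb Ht1 u) as R1. pose proof (rr_bounds b t2 hb Ht2 u) as R2.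
  pose proof (rr_bounds b t1 hb Ht1 v) as S1'. pose proof (rr_bounds b t2 hb Ht2 v) as S2'.
  set (A1 := appw b t1 u 0) in *. set (A2 := appw b t2 u 0) in *.
  set (B1 := appw b t1 v 0) in *. set (B2 := appw b t2 v 0) in *.
  set (r1 := rr b t1 u) in *. set (r2 := rr b t2 u) in *.
  set (s1 := rr b t1 v) in *. set (s2 := rr b t2 v) in *.
  set (Ru := rr b (1/9) u) in *. set (Rv := rr b (1/9) v) in *.
  set (Q := t1 ^ k).
  assert (HQ : 0 <= Q) by (apply pow_le; lra).
  assert (HQ2 : Q <= t2 ^ k) by (apply pow_incr; lra).
  assert (HQ1 : Q <= 1) by (rewrite <- (pow1 k); apply pow_incr; lra).
  assert (HP1 : t1 ^ S k = t1 * Q) by reflexivity.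
  assert (HP2 : t2 * Q <= t2 ^ S k) by (change (t2 ^ S k) with (t2 * t2 ^ k); apply Rmult_le_compat_l; lra).
  assert (HP2' : t2 ^ S k <= 1) by (rewrite <- (pow1 (S k)); apply pow_incr; lra).
  set (B := b ^ S m) in *.
  assert (HB : 0 < B) by (apply pow_lt; lra).
  assert (HB' : B <= 1) by (unfold B; rewrite <- (pow1 (S m)); apply pow_incr; lra).
  set (P1 := t1 ^ S k) in *. set (P2 := t2 ^ S k) in *.
  set (D := t2 - t1).
  assert (HD : 0 <= D) by (unfold D; lra).
  assert (H8 : 8 * B <= 9 * P1).
  { assert (B * 8 <= B * (B1 + s1 * y2 + 8)) by nra.
    assert (P1 * (A1 + r1 * y1 + 8) <= P1 * 9) by (apply Rmult_le_compat_l; [rewrite HP1; nra | lra]). lra. }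
  assert (Hdiff : P2 * (A2 + 8) - P1 * (A1 + 8) - B * (B2 - B1) <= Ru + Rv).
  { assert (B * s2 * z2 <= Rv) by (assert (s2 * z2 <= Rv) by nra; nra).
    assert (P1 * r1 * y1 <= Ru) by (assert (r1 * y1 <= Ru) by nra; assert (P1 <= 1) by nra; nra).
    assert (0 <= P2 * r2 * z1).
    { assert (0 <= P2) by (unfold P2; apply pow_le; lra). assert (0 <= r2 * z1) by nra. nra. }
    assert (0 <= B * s1 * y2) by (assert (0 <= s1 * y2) by nra; nra).
    nra. }
  assert (Hlow1 : (P2 - P1) * (A2 + 8) >= 8 * Q * D).
  { assert (P2 - P1 >= Q * D) by (unfold D; rewrite HP1; replace (Q * (t2 - t1)) with (t2 * Q - t1 * Q) by ring; lra).
    assert (0 <= Q * D) by (apply Rmult_le_pos; lra).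
    assert ((P2 - P1) * (A2 + 8) >= (P2 - P1) * 8) by (apply Rle_ge, Rmult_le_compat_l; lra). lra. }
  assert (Hlow2 : P1 * (A2 - A1) >= - (Q / 8) * D).
  { rewrite HP1. assert (0 <= t1 * Q) by (apply Rmult_le_pos; lra).
    assert (0 <= t1 * Q * (A2 - A1 + (9/8) * D)) by (apply Rmult_le_pos; unfold D; lra).
    assert (0 <= Q * D) by (apply Rmult_le_pos; lra).
    assert (t1 * (Q * D) <= (1/9) * (Q * D)) by (apply Rmult_le_compat_r; lra).
    replace (- (Q / 8) * D) with (- (1/8) * (Q * D)) by field.
    replace (t1 * Q * (A2 - A1 + 9 / 8 * D)) with (t1 * Q * (A2 - A1) + (9/8) * (t1 * (Q * D))) in H0 by ring.
    lra. }
  assert (HtQ : t1 * Q <= (1/9) * Q) by (apply Rmult_le_compat_r; lra).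
  assert (HQB : 8 * B <= Q) by (rewrite HP1 in H8; lra).
  assert (Hlow3 : B * (B2 - B1) <= (9/64) * Q * D).
  { assert (B * (B2 - B1) <= B * ((9/8) * D)) by (apply Rmult_le_compat_l; unfold D; lra).
    assert (B * ((9/8) * D) <= ((1/8) * Q) * ((9/8) * D)) by (apply Rmult_le_compat_r; unfold D; lra).
    lra. }
  assert (P2 * (A2 + 8) - P1 * (A1 + 8) = (P2 - P1) * (A2 + 8) + P1 * (A2 - A1)) by ring.
  assert (7 * (Q * D) <= Ru + Rv) by lra.
  assert (B * D <= Q * D) by (apply Rmult_le_compat_r; lra).
  fold D. rewrite Rmult_comm. lra.
Qed.

Definition Nkm (b : R) (k m : nat) (t : R) : Prop :=
  0 < t < 1/9 /\ exists K, is_attractor b t K /\ exists w1 w2, K w1 /\ K w2 /\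
    t ^ (S k) * (w1 + 8) = b ^ (S m) * (w2 + 8).

Lemma Nkm_null b k m : 0 < b < 1/9 -> lebesgue_null (Nkm b k m).
Proof.
  intros hb. apply jordan_null. intros eps Heps.
  set (B := b ^ S m). assert (HB : 0 < B) by (apply pow_lt; lra).
  set (sg := 1/9 + b + 1/9).
  destruct (small_pow (3 * sg) (eps * B / 4) ltac:(unfold sg; lra)) as [n Hn].
  { apply Rmult_lt_0_compat; [apply Rmult_lt_0_compat|]; lra. }
  set (t0 := fun u v => epsilon (inhabits 0) (Eset b k m u v)).
  set (W := fun u v => rr b (1/9) u + rr b (1/9) v).
  assert (HW : forall u v, 0 <= W u v).
  { intros u v. unfold W. pose proof (rr_bounds b (1/9) hb ltac:(lra) u).
    pose proof (rr_bounds b (1/9) hb ltac:(lra) v). lra. }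
  set (I := fun u v => (t0 u v - W u v / B, t0 u v + W u v / B)).
  exists (flat_map (fun u => map (fun v => I u v) (words n)) (words n)).
  split; [|split].
  - intros p Hp. apply in_flat_map in Hp. destruct Hp as [u [_ Hp]].
    apply in_map_iff in Hp. destruct Hp as [v [<- _]]. unfold I; simpl.
    pose proof (HW u v). assert (0 <= W u v / B) by (unfold Rdiv; apply Rmult_le_pos; [lra | apply Rlt_le, Rinv_0_lt_compat; lra]). lra.
  - intros t [Ht [K [HK [w1 [w2 [Hw1 [Hw2 Eq]]]]]]].
    destruct (decomp b t K HK n w1 Hw1) as [u [y1 [Hu [Hy1 E1]]]].
    destruct (decomp b t K HK n w2 Hw2) as [v [y2 [Hv [Hy2 E2]]]].
    assert (HE : Eset b k m u v t).
    { split; [lra|]. exists y1, y2. rewrite <- E1, <- E2.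
      split; [apply (K01 b t hb Ht K HK); auto|]. split; [apply (K01 b t hb Ht K HK); auto|]. auto. }
    assert (HE0 : Eset b k m u v (t0 u v)) by (apply epsilon_spec; exists t; auto).
    exists (I u v). split.
    + apply in_flat_map. exists u. split. rewrite <- Hu. apply words_in.
      apply in_map_iff. exists v. split; auto. rewrite <- Hv. apply words_in.
    + unfold I; simpl.
      destruct (Rle_or_lt t (t0 u v)) as [Hle|Hlt].
      * pose proof (diam b k m u v t (t0 u v) hb HE HE0 Hle).
        assert (t0 u v - t <= W u v / B).
        { apply (Rmult_le_reg_r B); auto. replace (W u v / B * B) with (W u v) by (field; lra). unfold W; fold B in H; lra. }
        pose proof (HW u v). assert (0 <= W u v / B) by (unfold Rdiv; apply Rmult_le_pos; [lra | apply Rlt_le, Rinv_0_lt_compat; lra]). lra.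
      * pose proof (diam b k m u v (t0 u v) t hb HE0 HE ltac:(lra)).
        assert (t - t0 u v <= W u v / B).
        { apply (Rmult_le_reg_r B); auto. replace (W u v / B * B) with (W u v) by (field; lra). unfold W; fold B in H; lra. }
        pose proof (HW u v). assert (0 <= W u v / B) by (unfold Rdiv; apply Rmult_le_pos; [lra | apply Rlt_le, Rinv_0_lt_compat; lra]). lra.
  - rewrite sumL_flat_map.
    rewrite (sumL_ext _ (fun u => (2 / B) * (INR (length (words n)) * rr b (1/9) u) + (2 / B) * sg ^ n)).
    2:{ intro u. rewrite sumL_map.
        rewrite (sumL_ext _ (fun v => (2 / B) * rr b (1/9) u + (2 / B) * rr b (1/9) v)).
        2:{ intro v. unfold I, W; simpl. field. lra. }
        rewrite sumL_add, sumL_const, sumL_scal, sum_words. fold sg. field. lra. }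
    rewrite sumL_add, sumL_scal, sumL_const, sumL_scal, sum_words. fold sg.
    rewrite length_words.
    replace (2 / B * (3 ^ n * sg ^ n) + 3 ^ n * (2 / B * sg ^ n)) with (4 / B * (3 * sg) ^ n)
      by (rewrite Rpow_mult_distr; field; lra).
    apply Rlt_le. apply (Rmult_lt_reg_r (B / 4)). apply Rdiv_lt_0_compat; lra.
    replace (4 / B * (3 * sg) ^ n * (B / 4)) with ((3 * sg) ^ n) by (field; lra).
    replace (eps * (B / 4)) with (eps * B / 4) by field. exact Hn.
Qed.

Theorem proposition9 (b : R) (hb : 0 < b < 1/9) :
  exists N : R -> Prop, lebesgue_null N /\
    forall t : R, 0 < t < 1/9 -> ~ N t ->
      forall K : R -> Prop, is_attractor b t K ->
        forall y : R,
          (img (S1 t) K y /\ img (S2 b) K y) <-> img (S1 t) (img (S2 b) K) y.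
Proof.
  exists (fun t => exists j, Nkm b (fst (enum j)) (snd (enum j)) t).
  split.
  { apply null_union. intro j. apply Nkm_null; auto. }
  intros t Ht HN K HK y.
  pose proof (K_S1 b t K HK) as KS1. pose proof (K_S2 b t K HK) as KS2.
  pose proof (K0 b t hb Ht K HK) as HK0.
  split.
  - intros [[x1 [Hx1 Ey1]] [x2 [Hx2 Ey2]]]. unfold S1 in Ey1. unfold S2 in Ey2.
    pose proof HK as [Hne [Hc Hinv]].
    assert (Hb01 : forall z, K z -> 0 <= z <= 1) by (intros z Hz; apply (K01 b t hb Ht K); [split; [|split]|]; auto).
    assert (P1 := peel K t b ltac:(lra)
      (fun z Hz => match proj1 (Hinv z) Hz with
                   | or_introl H => or_introl H
                   | or_intror (or_introl H) => or_intror (or_introl H)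
                   | or_intror (or_intror H) => or_intror (or_intror H) end) Hb01 x1 Hx1).
    assert (P2 := peel K b t ltac:(lra)
      (fun z Hz => match proj1 (Hinv z) Hz with
                   | or_introl H => or_intror (or_introl H)
                   | or_intror (or_introl H) => or_introl H
                   | or_intror (or_intror H) => or_intror (or_intror H) end) Hb01 x2 Hx2).
    assert (Hzero : y = 0 -> img (S1 t) (img (S2 b) K) y).
    { intros ->. exists 0. split. exists 0. split; auto. unfold S2; ring. unfold S1; ring. }
    destruct P1 as [Z1 | [k [w1 [Hw1 [E1 | E1]]]]].
    + apply Hzero. rewrite Ey1, Z1. ring.
    + exists (b * (t ^ k * w1)). split. exists (t ^ k * w1). split. apply (K_S1n b t K HK); auto. unfold S2; ring.
      unfold S1. rewrite Ey1, E1. ring.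
    + destruct P2 as [Z2 | [m [w2 [Hw2 [E2 | E2]]]]].
      * apply Hzero. rewrite Ey2, Z2. ring.
      * exists (b * (b ^ m * w2)). split. exists (b ^ m * w2). split. apply (K_S2n b t K HK); auto. unfold S2; ring.
        unfold S1. rewrite Ey2, E2. simpl. ring.
      * exfalso. apply HN. exists (Tri (k + m) + k)%nat. rewrite enum_surj. simpl.
        split; auto. exists K. split. auto. exists w1, w2. split; auto. split; auto.
        assert (t * x1 = b * x2) by lra. rewrite E1, E2 in H. unfold S3 in H.
        simpl. replace (t * t ^ k * (w1 + 8)) with (9 * (t * (t ^ k * ((w1 + 8) / 9)))) by field.
        rewrite H. field.
  - intros [x [[w [Hw Ex]] Ey]]. unfold S1, S2 in *. split.
    + exists x. split; auto. rewrite Ex. apply KS2; auto.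
    + exists (t * w). split. apply KS1; auto. rewrite Ey, Ex. ring.
Qed.
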